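(* Let $\mathcal{G}^s$ be an SCG and consider the effect $P(y_t\mid \text{do}(x^1_{t-\gamma_1}),\dots,\text{do}(x^n_{t-\gamma_n}))$. The following are equivalent: 1. There exist an intervention $X^i_{t-\gamma_i}$ and a candidate FTCG $\mathcal{G}^f\in\mathcal{C}(\mathcal{G}^s)$ containing a directed path $X^i_{t-\gamma_i}\leftsquigarrow Y_t$ (from $Y_t$ to $X^i_{t-\gamma_i}$) which remains in $\mathcal{NC}\cup\{X^i_{t-\gamma_i}\}$. 2. There exists an intervention $X^i_{t-\gamma_i}$ with $\gamma_i=0$ and $X^i\in\text{Desc}(Y,\mathcal{G}^s_{|\mathcal{S}})$, where $\mathcal{S}:=\{S\in\mathcal{V}^s: t_{\mathcal{NC}}(S)\le t\}\cup\{X^j\in\mathcal{X}^s:\gamma_j=0\}$ and $\mathcal{G}^s_{|\mathcal{S}}$ is the subgraph of $\mathcal{G}^s$ induced by $\mathcal{S}$.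
   Context: Let $\mathcal{V}$ be a finite set of time series, $\mathcal{V}^f=\{X_s: X\in\mathcal{V},s\in\mathbb{Z}\}$. An FTCG is a DAG on $\mathcal{V}^f$ whose edges $X_s\to Z_{s'}$ satisfy $s\le s'$. The SCG reduced from an FTCG $\mathcal{G}^f$ is $\mathcal{G}^s=(\mathcal{V}^s,\mathcal{E}^s)$, $\mathcal{V}^s=\mathcal{V}$, with $X\to Z$ iff $\mathcal{G}^f$ has an edge $X_{s-\gamma}\to Z_s$ with $\gamma\ge0$. An SCG is a graph reduced from some FTCG; $\mathcal{C}(\mathcal{G}^s)$ is the class of candidate FTCGs (those from which $\mathcal{G}^s$ is reduced). Descendants are via directed paths (a vertex is its own descendant). A path from set $\mathbf{A}$ to $\mathbf{B}$ is proper if only its first vertex is in $\mathbf{A}$. A path remains in a set $S$ if all its vertices are in $S$. $\text{Forb}(\mathbf{X},\mathbf{Y},\mathcal{G})$ is the set of all descendants of any $W\notin\mathbf{X}$ lying on a proper directed path from $\mathbf{X}$ to $\mathbf{Y}$ in $\mathcal{G}$. Effect setup: fix $Y\in\mathcal{V}^s$, a time $t$, and interventions $X^1_{t-\gamma_1},\dots,X^n_{t-\gamma_n}$ (distinct vertices of $\mathcal{V}^f$), with standing assumptions $\gamma_i\ge0$ and $Y$ a descendant of every $X^i$ in $\mathcal{G}^s$. $\mathcal{X}^f=\{X^i_{t-\gamma_i}\}_i$, $\mathcal{X}^s=\{X^i\}_i$. $\mathcal{CF}=\bigcup_{\mathcal{G}^f\in\mathcal{C}(\mathcal{G}^s)}\text{Forb}(\mathcal{X}^f,Y_t,\mathcal{G}^f)$,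 $\mathcal{NC}=\mathcal{CF}\setminus\mathcal{X}^f$. For $F\in\mathcal{V}^s$, $t_{\mathcal{NC}}(F)=\min\{t_1:F_{t_1}\in\mathcal{NC}\}$ with $\min\emptyset=+\infty$. *)

(* Defs.v *)
From mathcomp Require Import all_boot all_order all_algebra.
Set Implicit Arguments. Unset Strict Implicit. Unset Printing Implicit Defensive.
Import Order.TTheory GRing.Theory Num.Theory.
Local Open Scope ring_scope.

(** Generic (possibly infinite) directed graphs given by a Prop-valued edge
    relation.  A directed walk starting at [x] is the vertex list [x :: p]. *)
Fixpoint epath {T : Type} (E : T -> T -> Prop) (x : T) (p : seq T) : Prop :=
  match p with
  | [::] => True
  | y :: p' => E x y /\ epath E y p'
  end.

(** Prop-valued list membership (no decidable equality needed) *)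
Fixpoint inseq {T : Type} (u : T) (p : seq T) : Prop :=
  match p with
  | [::] => False
  | y :: p' => u = y \/ inseq u p'
  end.

Definition dipath {T : Type} (E : T -> T -> Prop) (a b : T) (p : seq T) : Prop :=
  epath E a p /\ last a p = b.

Definition on_path {T : Type} (a : T) (p : seq T) (u : T) : Prop :=
  u = a \/ inseq u p.

Definition acyclic {T : Type} (E : T -> T -> Prop) : Prop :=
  forall x p, epath E x p -> last x p = x -> p = [::].

(** descendants (a vertex is its own descendant) *)
Definition desc {T : Type} (E : T -> T -> Prop) (a b : T) : Prop :=
  exists p, dipath E a b p.

Definition is_FTCG (V : Type) (E : V * int -> V * int -> Prop) : Prop :=
  (forall x y, E x y -> x.2 <= y.2) /\ acyclic E.

Definition reduced_SCG (V : Type) (E : V * int -> V * int -> Prop) : V -> V -> Prop :=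
  fun X Z => exists (s gamma : int), 0 <= gamma /\ E (X, s - gamma) (Z, s).

Definition candidate (V : Type) (Gs : V -> V -> Prop) (E : V * int -> V * int -> Prop) : Prop :=
  is_FTCG E /\ (forall X Z, Gs X Z <-> reduced_SCG E X Z).

Definition is_SCG (V : Type) (Gs : V -> V -> Prop) : Prop :=
  exists E, candidate Gs E.

Definition Forb {T : Type} (A : T -> Prop) (y : T) (E : T -> T -> Prop) (v : T) : Prop :=
  exists W, ~ A W /\
    exists a p, [/\ A a, dipath E a y p, (forall u, inseq u p -> ~ A u),
                    on_path a p W & desc E W v].

Definition induced {T : Type} (G : T -> T -> Prop) (P : T -> Prop) : T -> T -> Prop :=
  fun a b => [/\ P a, P b & G a b].

Section Effect.
Variables (V : Type) (Gs : V -> V -> Prop) (n : nat)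
          (X : 'I_n -> V) (gamma : 'I_n -> int) (Y : V) (t : int).

Definition Xf (v : V * int) : Prop := exists i, v = (X i, t - gamma i).

Definition CF (v : V * int) : Prop :=
  exists E, candidate Gs E /\ Forb Xf (Y, t) E v.

Definition NC (v : V * int) : Prop := CF v /\ ~ Xf v.

(** "t_NC(F) <= t'" where t_NC(F) = min {t1 : F_t1 \in NC} (min of empty = +oo) *)
Definition tNC_le (F : V) (t' : int) : Prop := exists t1, t1 <= t' /\ NC (F, t1).

Definition Sset (S : V) : Prop :=
  tNC_le S t \/ exists j, gamma j = 0 /\ S = X j.

End Effect.

(* Main.v *)
Require Import Defs.
From mathcomp Require Import all_boot all_order all_algebra.
From mathcomp Require Import zify.
From Stdlib Require Import Classical.
Import Order.TTheory GRing.Theory Num.Theory.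
Local Open Scope ring_scope.
Set Implicit Arguments. Unset Strict Implicit. Unset Printing Implicit Defensive.
Lemma inseqP (T : eqType) (u : T) p : inseq u p <-> u \in p.
Proof.
elim: p => [|y p IH] /=; first by rewrite in_nil.
rewrite in_cons; split.
- by case=> [->|/IH ->]; rewrite ?eqxx ?orbT.
- by case/orP=> [/eqP->|/IH]; [left|right].
Qed.

Lemma epath_cat T (E : T -> T -> Prop) x p q :
  epath E x (p ++ q) <-> epath E x p /\ epath E (last x p) q.
Proof.
elim: p x => [|y p IH] x /=; first by tauto.
split.
- by move=> [h /IH [h1 h2]].
- by move=> [[h h1] h2]; split => //; apply/IH.
Qed.

Lemma epath_rcons T (E : T -> T -> Prop) x p z :
  epath E x (rcons p z) <-> epath E x p /\ E (last x p) z.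
Proof.
rewrite -cats1; split.
- by move/epath_cat => [h [h2 _]].
- by move=> [h1 h2]; apply/epath_cat; split.
Qed.

Lemma epath_mono T (R R' : T -> T -> Prop) x p :
  (forall a b, R a b -> R' a b) -> epath R x p -> epath R' x p.
Proof. by move=> H; elim: p x => [|y p IH] x //= [h1 h2]; split; auto. Qed.

Lemma shortenP (T : eqType) (E : T -> T -> Prop) a b p :
  dipath E a b p -> exists q, [/\ dipath E a b q, uniq (a :: q) & {subset q <= p}].
Proof.
elim: p a => [|y p IH] a [/= hp hl].
  by exists [::]; split.
case: hp => hay hp.
have [q [[hq hlq] uq sq]] := IH y (conj hp hl).
case: (boolP (a \in y :: q)) => ha.
- rewrite in_cons in ha; case/orP: ha => [/eqP ay|aq].
  + subst y; exists q; split => //.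
    by move=> u uq'; rewrite in_cons (sq u uq') orbT.
  + move: hq hlq uq sq; case/splitPr: aq => q1 q2 hq hlq uq sq.
    exists q2; split.
    * split; last by rewrite last_cat in hlq.
      by move/epath_cat: hq => [_ [_ h]].
    * by move: uq; rewrite -cat_cons cat_uniq => /and3P [_ _].
    * move=> u uq2; rewrite in_cons (sq u) ?orbT //.
      by rewrite mem_cat in_cons uq2 !orbT.
- exists (y :: q); split => //; first by rewrite cons_uniq ha.
  move=> u; rewrite !in_cons => /orP [->//|/sq ->]; by rewrite orbT.
Qed.

Lemma last_hit (T : eqType) (R : T -> T -> Prop) (aP : seq T) x c :
  x \in aP -> uniq c -> epath R x c ->
  exists y d, [/\ y \in aP, y \in x :: c, epath R y d, last y d = last x c &
     [/\ uniq d, {subset d <= c} & forall z, z \in d -> z \notin aP]].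
Proof.
move=> xa; elim/last_ind: c => [|c z IH].
  by move=> _ _; exists x, [::]; split => //; rewrite mem_head.
rewrite rcons_uniq => /andP [zc uc] /epath_rcons [hc hz].
have [y [d [ya yx hd hl [ud sd nd]]]] := IH uc hc.
case: (boolP (z \in aP)) => za.
  exists z, [::]; split => //.
  - by rewrite in_cons mem_rcons mem_head orbT.
  - by rewrite last_rcons.
exists y, (rcons d z); split; [exact: ya | | | | split].
- by move: yx; rewrite !in_cons mem_rcons in_cons => /orP [->//|->]; rewrite !orbT.
- by apply/epath_rcons; split => //; rewrite hl.
- by rewrite !last_rcons.
- rewrite rcons_uniq ud andbT; apply: contra zc; exact: sd.
- by move=> u; rewrite mem_rcons in_cons => /orP [/eqP->|/sd]; [rewrite mem_rcons mem_head|rewrite mem_rcons in_cons => ->; rewrite orbT].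
- by move=> u; rewrite mem_rcons in_cons => /orP [/eqP->//|/nd].
Qed.

Lemma trunc_first T (R : T -> T -> Prop) (Q : T -> Prop) x p :
  epath R x p -> Q (last x p) ->
  exists q r, [/\ p = q ++ r, epath R x q, Q (last x q) &
     forall u, inseq u (x :: q) -> Q u -> u = last x q].
Proof.
elim: p x => [|y p IH] x /=.
  by move=> _ hq; exists [::], [::]; split => // u [->|[]].
move=> [hxy hp] hq.
case: (classic (Q x)) => qx.
  by exists [::], (y :: p); split => // u [->|[]].
have [q [r [-> hq' qq hu]]] := IH y hp hq.
exists (y :: q), r; split => //.
move=> u [ux|hu'] qu; first by subst u.
exact: hu.
Qed.

Lemma prefix_free (T : eqType) (R : T -> T -> Prop) (Q : T -> Prop) x cs v :
  epath R x cs -> uniq (x :: cs) ->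
  (forall u, u \in x :: cs -> Q u -> u = last x cs) ->
  v \in x :: cs -> v <> last x cs ->
  exists c', [/\ epath R x c', last x c' = v, uniq (x :: c'), {subset c' <= cs}
     & forall w, w \in x :: c' -> ~ Q w].
Proof.
elim: cs x => [|z cs IH] x /=.
  by move=> _ _ _; rewrite mem_seq1 => /eqP.
move=> [hxz hp] /andP [xn uz] hQ vin vne.
have nqx : ~ Q x.
  move=> qx; have := hQ x (mem_head _ _) qx => ex.
  by move: xn; rewrite ex mem_last.
case: (eqVneq v x) => [->|vx].
  exists [::]; split => //.
  by move=> w; rewrite mem_seq1 => /eqP ->.
have vin' : v \in z :: cs by move: vin; rewrite in_cons (negPf vx).
have [c'' [h1 h2 h3 h4 h5]] := IH z hp uz (fun u hu => hQ u (@mem_behead _ (x :: z :: cs) u hu)) vin' vne.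
exists (z :: c''); split => //.
- apply/andP; split => //; apply: contra xn.
  by rewrite in_cons => /orP [/eqP->|/h4 h]; rewrite in_cons ?eqxx ?h ?orbT.
- by move=> u; rewrite in_cons => /orP [/eqP->|/h4 h]; rewrite in_cons ?eqxx ?h ?orbT.
- by move=> w; rewrite in_cons => /orP [/eqP->//|]; apply: h5.
Qed.
Definition EL (V : eqType) (Gs : V -> V -> Prop) (L : seq (V * int)) (x y : V * int) : Prop :=
  Gs x.1 y.1 /\ (x.2 < y.2 \/ (x.2 = y.2 /\ y \in L /\ (index x L < index y L)%N)).

Definition Rk (V : eqType) (L : seq (V * int)) (x y : V * int) : Prop :=
  x.2 < y.2 \/ (x.2 = y.2 /\ (index x L < index y L)%N).

Lemma Rk_trans (V : eqType) L (x y z : V * int) : Rk L x y -> Rk L y z -> Rk L x z.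
Proof.
rewrite /Rk => [[h1|[h1 h1']] [h2|[h2 h2']]].
- by left; lia.
- by left; lia.
- by left; lia.
- by right; split; lia.
Qed.

Lemma EL_rank (V : eqType) Gs (L : seq (V * int)) x p :
  epath (EL Gs L) x p -> p = [::] \/ Rk L x (last x p).
Proof.
elim: p x => [|y p IH] x /=; first by left.
move=> [[_ hxy] hp]; right.
have hR : Rk L x y by case: hxy => [h|[h [_ h']]]; [left|right].
by case: (IH y hp) => [->//|h]; apply: Rk_trans hR h.
Qed.

Lemma EL_candidate (V : eqType) Gs (L : seq (V * int)) : candidate Gs (EL Gs L).
Proof.
split; first split.
- by move=> x y [_ [h|[h _]]]; lia.
- move=> x p hp hl; case: (EL_rank hp) => // h.
  by move: h; rewrite hl /Rk => [[h|[_ h]]]; [move: h; rewrite ltxx|move: h; rewrite ltnn].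
- move=> A B; split.
  + by move=> h; exists 1, 1; split => //; split => //=; left; rewrite subrr.
  + by move=> [s [g [_ [h _]]]].
Qed.

Lemma cand_edge V Gs (E : V * int -> V * int -> Prop) x y :
  candidate Gs E -> E x y -> Gs x.1 y.1 /\ x.2 <= y.2.
Proof.
move=> [[hmono _] hiff] hxy; split; last exact: hmono.
apply/hiff; exists y.2, (y.2 - x.2); split; first by have := hmono _ _ hxy; lia.
have -> : y.2 - (y.2 - x.2) = x.2 by lia.
by case: x hxy => ? ?; case: y => ? ?.
Qed.

Lemma EL_path (V : eqType) Gs (L : seq (V * int)) l1 d l2 y :
  L = l1 ++ d ++ l2 -> uniq L -> (index y L < size l1)%N ->
  epath (fun u v => Gs u.1 v.1 /\ u.2 <= v.2) y d ->
  epath (EL Gs L) y d.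
Proof.
elim: d l1 y => [|z d IH] l1 y //= hL uL hy [[hg hle] hp].
have zl1 : z \notin l1.
  by move: uL; rewrite hL cat_uniq => /and3P [_ /hasPn h _]; apply: h; rewrite mem_head.
have iz : index z L = size l1 by rewrite hL index_cat (negPf zl1) /= eqxx addn0.
split.
- split => //; move: hle; rewrite le_eqVlt => /orP [/eqP h|h]; last by left.
  right; split => //; split; first by rewrite hL !mem_cat mem_head orbT.
  by rewrite iz.
- apply: (IH (rcons l1 z)) => //.
  + by rewrite hL -cats1 -catA.
  + by rewrite iz size_rcons.
Qed.

Lemma epath_time V (E : V * int -> V * int -> Prop) x p :
  (forall a b, E a b -> a.2 <= b.2) -> epath E x p ->
  x.2 <= (last x p).2 /\ forall u, inseq u p -> x.2 <= u.2 /\ u.2 <= (last x p).2.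
Proof.
move=> hm; elim: p x => [|y p IH] x /=; first by split.
move=> [hxy hp]; have hy := hm _ _ hxy; have [h1 h2] := IH y hp.
split; first by lia.
move=> u [->|hu]; first by split => //.
have := h2 u hu; lia.
Qed.

Lemma proj_path V Gs (E : V * int -> V * int -> Prop) (P : V -> Prop) t x p :
  (forall A B, E (A,t) (B,t) -> Gs A B) ->
  (forall u, inseq u p -> u.2 = t) -> x.2 = t ->
  (forall u, on_path x p u -> P u.1) ->
  epath E x p -> epath (induced Gs P) x.1 (map fst p).
Proof.
move=> hG; elim: p x => [|y p IH] x //= hp hx hP [hxy hr].
have hy : y.2 = t by apply: hp; left.
split.
- split; [apply: (hP x); left | apply: (hP y); right; left |] => //.
  have ex : x = (x.1, t) by case: x hx {hP hxy} => ? ? /= ->.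
  have ey : y = (y.1, t) by case: y hy {hP hxy hp hr} => ? ? /= ->.
  by apply: hG; rewrite -ex -ey.
- apply: IH => //.
  + by move=> u hu; apply: hp; right.
  + by move=> u [->|hu]; apply: hP; right; [left|right].
Qed.

Lemma epath_lift V (Gs : V -> V -> Prop) (t : int) x p :
  epath Gs x p ->
  epath (fun u v => Gs u.1 v.1 /\ u.2 <= v.2) (x, t) (map (fun v => (v, t)) p).
Proof. by elim: p x => [|y p IH] x //= [h1 h2]; split; auto. Qed.
Theorem lemma2 (V : finType) (Gs : V -> V -> Prop) (n : nat)
    (X : 'I_n -> V) (gamma : 'I_n -> int) (Y : V) (t : int) :
  is_SCG Gs ->
  injective (fun i : 'I_n => (X i, t - gamma i)) ->
  (forall i, 0 <= gamma i) ->
  (forall i, desc Gs (X i) Y) ->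
  ((exists i E p,
      [/\ candidate Gs E,
          dipath E (Y, t) (X i, t - gamma i) p &
          forall u, on_path (Y, t) p u ->
            NC Gs X gamma Y t u \/ u = (X i, t - gamma i)])
   <->
   (exists i, gamma i = 0 /\
      desc (induced Gs (Sset Gs X gamma Y t)) Y (X i))).
Proof.
move=> hSCG hinj hg hdesc; split.
- move=> [i [E [p [hc [hp hl] hon]]]].
  have hmono : forall a b, E a b -> a.2 <= b.2 := fun a b h => (cand_edge hc h).2.
  have [ht hu] := epath_time hmono hp.
  rewrite hl /= in ht hu.
  have g0 : gamma i = 0 by have := hg i; lia.
  have hu' : forall u, inseq u p -> u.2 = t.
    by move=> u /hu /=; rewrite g0; lia.
  have hon' : forall u, on_path (Y, t) p u -> u.2 = t.
    by move=> u [->//|/hu']. 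
  exists i; split => //.
  exists (map fst p); split; last first.
    by rewrite -[Y]/((Y,t).1) last_map hl.
  apply: (@proj_path _ _ E _ t (Y, t)) => //.
  + move=> A B h; apply/(proj2 hc A B); exists t, 0; split => //.
    by rewrite subr0.
  + move=> u hu0; have := hon' u hu0; case: (hon u hu0) => [hN|->] et.
    * left; exists u.2; split; first by rewrite et.
      by case: u hu0 hN et.
    * by right; exists i.
- move=> [i [gi [p [hp hl]]]].
  pose Q := fun v => exists j, gamma j = 0 /\ v = X j.
  have QXf : forall w, ~ Q w -> ~ Xf X gamma t (w, t).
    move=> w nq [j ej]; apply: nq; exists j; case: ej => -> h; split => //; lia.
  case: (classic (Q Y)) => [[j [gj ej]] | nqY].
    have [E0 hE0] := hSCG.
    exists j, E0, [::]; split => //.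
      by split => //=; rewrite gj subr0 ej.
    by move=> u [->|[]]; right; rewrite gj subr0 ej.
  have [q [[hq hlq] uq sq]] := shortenP (conj hp hl).
  have qlast : Q (last Y q) by rewrite hlq; exists i.
  have [cs [r [ecs hcs qcs hfirst]]] := @trunc_first _ _ Q _ _ hq qlast.
  have ucs : uniq (Y :: cs).
    by move: uq; rewrite ecs -cat_cons cat_uniq => /and3P [].
  have [jj [gjj ejj]] := qcs.
  have SY : Sset Gs X gamma Y t Y.
    by case: cs {ecs ucs ejj} hcs qcs hfirst => [_ //|z cs] /= [[]].
  have hGs : epath Gs Y cs by apply: epath_mono hcs => a b [].
  case: SY => [[t1 [t1le [hCF hnx]]]|//].
  case: hCF => E0 [hc0 [W [nW [a [P [xa [hP hlP] hprop onW descW]]]]]].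
  have [P' [[hP' hlP'] uP sP]] := shortenP (conj hP hlP).
  pose f := fun v : V => (v, t).
  have finj : injective f by move=> u v [].
  exists jj, (EL Gs (map f (Y :: cs))), (map f cs); split.
  + exact: EL_candidate.
  + split.
    * apply: (@EL_path _ _ _ [:: (Y, t)] (map f cs) [::]).
      - by rewrite cats0.
      - by rewrite map_inj_uniq.
      - by rewrite /= eqxx.
      - exact: epath_lift.
    * by rewrite -[(Y,t)]/(f Y) last_map /f ejj gjj subr0.
  + move=> u hu.
    have [v [ev hv]] : exists v, u = (v, t) /\ v \in Y :: cs.
      case: hu => [->|/inseqP]; first by exists Y; rewrite mem_head.
      by case/mapP => v hv ->; exists v; rewrite in_cons hv orbT.
    subst u; case: (eqVneq v (last Y cs)) => [->|vne].
      by right; rewrite ejj gjj subr0.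
    have hQ : forall w, w \in Y :: cs -> Q w -> w = last Y cs.
      by move=> w /inseqP; apply: hfirst.
    have nqv : ~ Q v by move=> /(hQ v hv) /eqP; rewrite (negPf vne).
    left; split; last exact: QXf.
    have [c' [hc' hlc' uc' sc' nq']] := prefix_free hGs ucs hQ hv (elimN eqP vne).
    have xa' : (Y, t) \in a :: P' by rewrite -hlP' mem_last.
    have uc : uniq (map f c') by rewrite map_inj_uniq //; case/andP: uc'.
    have [y [d [ya yx hd hld [ud sd nd]]]] := last_hit xa' uc (epath_lift t hc').
    have uL : uniq ((a :: P') ++ d).
      rewrite cat_uniq uP ud andbT; apply/hasPn => z /nd //.
    exists (EL Gs ((a :: P') ++ d)); split; first exact: EL_candidate.
    exists y; split.
      move: yx; rewrite -[(Y,t)]/(f Y) -map_cons => /mapP [w hw ->].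
      exact: QXf (nq' w hw).
    exists a, P'; split => //.
    * split => //.
      apply: (@EL_path _ _ _ [:: a] P' d) => //.
      - by rewrite /= eqxx.
      - by apply: epath_mono hP' => u w /(cand_edge hc0).
    * by move=> u /inseqP /sP /inseqP; apply: hprop.
    * by move: ya; rewrite in_cons => /orP [/eqP ->|/inseqP h]; [left|right].
    * exists d; split.
      - apply: (@EL_path _ _ _ (a :: P') d [::]) => //.
        + by rewrite cats0.
        + by rewrite index_cat ya index_mem.
      - by rewrite hld -[(Y,t)]/(f Y) last_map hlc'.
Qed.
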